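(* Let $P$ be a finite lattice, let $\mu:2^P\to\mathbb{R}_{\ge0}$ be additive, and let $r(f)=\mu(P\setminus\Phi f)$ for $f\in\mathcal{L}_P$. Define $\mathrm{fragility}(f)=\max\{r(w): w\in\mathcal{L}_P,\ w\le f,\ w\text{ prime}\}$. Then for all $f,g\in\mathcal{L}_P$, $\mathrm{fragility}(f+g)\le\mathrm{fragility}(f)+\mathrm{fragility}(g)$.
   Context: $P$ is a finite lattice. $\mathcal{L}_P$ is the set of maps $f:P\to P$ satisfying (A.1) $a\le f(a)$; (A.2) $a\le b\Rightarrow f(a)\le f(b)$; (A.3) $f(f(a))=f(a)$, ordered pointwise; it is a lattice with join $+$. $\Phi f=\{a:f(a)=a\}$. $f$ is prime if $P\setminus\Phi f$ is closed under $\wedge$. *)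

(* Defs.v *)
From HB Require Import structures.
From mathcomp Require Import all_boot all_order all_algebra.
Set Implicit Arguments. Unset Strict Implicit. Unset Printing Implicit Defensive.
Import Order.TTheory GRing.Theory Num.Theory.

Section ClosureDefs.
Context {disp : Order.disp_t} {P : finTBLatticeType disp}.

Definition is_closure (f : P -> P) : bool :=
  [&& [forall a : P, (a <= f a)%O],
      [forall a : P, forall b : P, (a <= b)%O ==> (f a <= f b)%O] &
      [forall a : P, f (f a) == f a]].

Definition le_fun (f g : P -> P) : bool := [forall a : P, (f a <= g a)%O].

Definition Phi (f : P -> P) : {set P} := [set a | f a == a].

Definition is_prime (f : P -> P) : bool :=
  [forall a : P, forall b : P,
     [&& a \notin Phi f & b \notin Phi f] ==> ((a `&` b)%O \notin Phi f)].

(* the join f + g in L_P: the closure operator whose fixed-point set is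
   Phi f :&: Phi g, i.e. (f+g)(a) = meet of all common fixed points above a *)
Definition cl_join (f g : P -> P) (a : P) : P :=
  (\meet_(x : P | (a <= x)%O && (x \in Phi f :&: Phi g)) x)%O.

Local Open Scope ring_scope.

Definition additive_measure (R : realFieldType) (mu : {set P} -> R) : Prop :=
  (forall A, 0 <= mu A) /\
  (forall A B : {set P}, [disjoint A & B] -> mu (A :|: B) = mu A + mu B).

Definition rk (R : realFieldType) (mu : {set P} -> R) (f : P -> P) : R :=
  mu (~: Phi f).

(* fragility(f) = max { r(w) : w in L_P, w <= f, w prime }.  The candidate set
   always contains the identity (with r = 0), and r >= 0, so starting the
   max at 0 does not change its value. *)
Definition fragility (R : realFieldType) (mu : {set P} -> R) (f : P -> P) : R :=
  \big[Num.max/0]_(w : {ffun P -> P} | [&& is_closure w, le_fun w f & is_prime w])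
     rk mu w.

End ClosureDefs.

(* Main.v *)
Require Import Defs.
From HB Require Import structures.
From mathcomp Require Import all_boot all_order all_algebra.
Import Order.TTheory GRing.Theory Num.Theory.

Section Lat.
Context {disp : Order.disp_t} {P : finTBLatticeType disp}.
Local Open Scope order_scope.

Definition valid (f : P -> P) (S : {set P}) : Prop :=
  [/\ forall x y, x \in S -> y \in S -> x `&` y \in S,
      forall x y, x \notin S -> y \notin S -> x `&` y \notin S,
      (\top : P) \notin S & forall x, x \in S -> f x != x].

Lemma closure_props (f : P -> P) : is_closure f ->
  [/\ forall a, a <= f a, forall a b, a <= b -> f a <= f b & forall a, f (f a) = f a].
Proof.
case/and3P=> /forallP h1 /forallP h2 /forallP h3; split => //.
  by move=> a b ab; have /forallP/(_ b)/implyP := h2 a; apply.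
by move=> a; apply/eqP.
Qed.

Lemma valid0 f : valid f set0.
Proof. rewrite /valid; split; [by move=> x y; rewrite inE|by move=> x y; rewrite !inE|by rewrite inE|by move=> x; rewrite inE]. Qed.

Lemma valid_ext f S p : is_closure f -> valid f S ->
  (forall x, x \in S -> f p <= x) ->
  valid f (S :|: [set x | (p <= x) && ~~ (f p <= x)]).
Proof.
move=> /closure_props [ext mon idem] [h1 h2 h3 h4] Sq.
have pq : p <= f p := ext p.
rewrite /valid; split.
- move=> x y; rewrite !inE => /orP [xS|/andP[px qx]] /orP [yS|/andP[py qy]].
  + by rewrite h1.
  + apply/orP; right; rewrite lexI py (le_trans pq (Sq _ xS)) /=.
    by apply: contra qy => /le_trans; apply; apply: leIr.
  + apply/orP; right; rewrite lexI px (le_trans pq (Sq _ yS)) /=.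
    by apply: contra qx => /le_trans; apply; apply: leIl.
  + apply/orP; right; rewrite lexI px py /=.
    by apply: contra qx => /le_trans; apply; apply: leIl.
- move=> x y; rewrite !inE !negb_or => /andP[xS xI] /andP[yS yI].
  rewrite h2 //= !lexI; apply/negP => /andP[/andP[px py] /negP H]; apply: H.
  move: xI yI; rewrite px py /= !negbK => -> ->; by [].
- by rewrite !inE negb_or h3 /= !lex1.
- move=> x; rewrite !inE => /orP [/h4 //|/andP [px qx]].
  apply: contra qx => /eqP fx; by rewrite -fx mon.
Qed.

Section Cover.
Variables (f g : P -> P) (N : {set P}).
Hypotheses (cf : is_closure f) (cg : is_closure g).
Hypothesis Nmeet : forall x y, x \in N -> y \in N -> x `&` y \in N.
Hypothesis Ntop : (\top : P) \notin N.
Hypothesis Nfix : forall x, x \in N -> (f x != x) || (g x != x).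

Definition upset (t : P) : {set P} := [set y | t <= y].

Lemma upset_proper (t u : P) : t < u -> upset u \proper upset t.
Proof.
move=> tu; apply/properP; split.
  by apply/subsetP => y; rewrite !inE => /(le_trans (ltW tu)).
by exists t; rewrite !inE ?lexx // lt_geF.
Qed.

Lemma cover_aux n : forall t, (#|upset t| <= n)%N -> exists S1 S2,
  [/\ valid f S1, valid g S2, (forall x, x \in S1 -> t <= x),
      (forall x, x \in S2 -> t <= x) &
      (forall x, x \in N -> t <= x -> x \in S1 :|: S2)].
Proof.
have [extf monf idf] := closure_props f cf.
have [extg mong idg] := closure_props g cg.
elim: n => [|n IH] t.
  by rewrite leqn0 => /eqP/card0_eq/(_ t); rewrite !inE lexx.
move=> ct.
case: (boolP (f t == t)) => ft; last first.
  have tlt : t < f t by rewrite lt_def ft extf.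
  have [S1 [S2 [v1 v2 s1 s2 cov]]] : exists S1 S2,
    [/\ valid f S1, valid g S2, (forall x, x \in S1 -> f t <= x),
      (forall x, x \in S2 -> f t <= x) &
      (forall x, x \in N -> f t <= x -> x \in S1 :|: S2)].
    apply: IH; rewrite -ltnS; apply: leq_trans ct; apply: proper_card; apply: upset_proper; exact: tlt.
  exists (S1 :|: [set x | (t <= x) && ~~ (f t <= x)]), S2; split.
  - exact: valid_ext.
  - exact: v2.
  - move=> x; rewrite !inE => /orP [/s1 /(le_trans (extf t)) //| /andP[] //].
  - by move=> x /s2; apply: le_trans.
  - move=> x xN tx; case: (boolP (f t <= x)) => fx.
      by move: (cov x xN fx); rewrite !inE -orbA => /orP [->|->]; rewrite ?orbT.
    by rewrite !inE tx fx orbT.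
case: (boolP (g t == t)) => gt; last first.
  have tlt : t < g t by rewrite lt_def gt extg.
  have [S1 [S2 [v1 v2 s1 s2 cov]]] : exists S1 S2,
    [/\ valid f S1, valid g S2, (forall x, x \in S1 -> g t <= x),
      (forall x, x \in S2 -> g t <= x) &
      (forall x, x \in N -> g t <= x -> x \in S1 :|: S2)].
    apply: IH; rewrite -ltnS; apply: leq_trans ct; apply: proper_card; apply: upset_proper; exact: tlt.
  exists S1, (S2 :|: [set x | (t <= x) && ~~ (g t <= x)]); split.
  - exact: v1.
  - exact: valid_ext.
  - by move=> x /s1; apply: le_trans.
  - move=> x; rewrite !inE => /orP [/s2 /(le_trans (extg t)) //| /andP[] //].
  - move=> x xN tx; case: (boolP (g t <= x)) => gx.
      by move: (cov x xN gx); rewrite !inE => /orP [->|->]; rewrite ?orbT.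
    by rewrite !inE tx gx !orbT.
have tN : t \notin N by apply/negP => /Nfix; rewrite ft gt.
case: (pickP (fun x => (x \in N) && (t <= x))) => [x0 /andP[x0N tx0]|none]; last first.
  exists set0, set0; split; try exact: valid0; try by move=> x; rewrite inE.
  by move=> x xN tx; move: (none x); rewrite xN tx.
pose m := \meet_(x | (x \in N) && (t <= x)) x.
have mN : m \in N.
  rewrite /m (bigD1 x0) /=; last by rewrite x0N tx0.
  have : (\meet_(i | ((i \in N) && (t <= i)) && (i != x0)) i \in N)
          || (\meet_(i | ((i \in N) && (t <= i)) && (i != x0)) i == \top).
    elim/big_ind: _ => [|a b /orP [aN|/eqP ->] /orP [bN|/eqP ->]|i /andP[/andP[iN _] _]]; rewrite ?eqxx ?orbT ?iN //.
    + by rewrite Nmeet.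
    + by rewrite meetx1 aN.
    + by rewrite meet1x bN.
    + by rewrite meetx1 eqxx orbT.
  by case/orP => [/(Nmeet x0 _ x0N) -> //|/eqP ->]; rewrite meetx1.
have tm : t <= m by apply/meetsP => i /andP[].
have tlt : t < m.
  rewrite lt_def tm andbT; apply: contraNneq tN => <-; exact: mN.
have [S1 [S2 [v1 v2 s1 s2 cov]]] : exists S1 S2,
    [/\ valid f S1, valid g S2, (forall x, x \in S1 -> m <= x),
      (forall x, x \in S2 -> m <= x) &
      (forall x, x \in N -> m <= x -> x \in S1 :|: S2)].
  apply: IH; rewrite -ltnS; apply: leq_trans ct; apply: proper_card; apply: upset_proper; exact: tlt.
exists S1, S2; split => //.
- by move=> x /s1; apply: le_trans.
- by move=> x /s2; apply: le_trans.
- move=> x xN tx; apply: cov => //; apply: meets_inf; by rewrite xN tx.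
Qed.
End Cover.

Section Build.
Variables (f : P -> P) (S : {set P}).
Hypotheses (cf : is_closure f) (vS : valid f S).

Definition wS : {ffun P -> P} := [ffun x => \meet_(y | (x <= y) && (y \notin S)) y].

Lemma wS_notin x : wS x \notin S.
Proof.
case: vS => _ h2 h3 _; rewrite ffunE.
elim/big_ind: _ => [//|a b aS bS|i /andP[] //]; exact: h2.
Qed.

Lemma wS_ge x : x <= wS x.
Proof. by rewrite ffunE; apply/meetsP => i /andP[]. Qed.

Lemma wS_le x y : x <= y -> y \notin S -> wS x <= y.
Proof. by move=> xy yS; rewrite ffunE; apply: meets_inf; rewrite xy yS. Qed.

Lemma wS_fix x : (wS x == x) = (x \notin S).
Proof.
apply/idP/idP => [/eqP <-|xS]; first exact: wS_notin.
by rewrite eq_le wS_ge andbT wS_le.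
Qed.

Lemma wS_Phi : Phi wS = ~: S.
Proof. by apply/setP => x; rewrite !inE wS_fix. Qed.

Lemma wS_closure : is_closure wS.
Proof.
apply/and3P; split; apply/forallP => a.
- exact: wS_ge.
- apply/forallP => b; apply/implyP => ab.
  apply: wS_le; [exact: le_trans ab (wS_ge b)|exact: wS_notin].
- by rewrite wS_fix wS_notin.
Qed.

Lemma wS_lef : le_fun wS f.
Proof.
have [ext _ idem] := closure_props f cf.
apply/forallP => a; apply: wS_le; first exact: ext.
case: vS => _ _ _ h4; apply/negP => /h4; by rewrite idem eqxx.
Qed.

Lemma wS_prime : is_prime wS.
Proof.
case: vS => h1 _ _ _.
apply/forallP => a; apply/forallP => b; apply/implyP.
rewrite wS_Phi !inE !negbK => /andP[aS bS]; exact: h1.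
Qed.

End Build.

Lemma cl_join_fix (f g : P -> P) x : f x = x -> g x = x -> cl_join f g x = x.
Proof.
move=> fx gx; apply/le_anti/andP; split.
  by apply: meets_inf; rewrite lexx !inE fx gx !eqxx.
by apply/meetsP => i /andP[].
Qed.

End Lat.

Local Open Scope ring_scope.

Lemma mu_mono (disp : Order.disp_t) (P : finTBLatticeType disp)
  (R : realFieldType) (mu : {set P} -> R) (A B : {set P}) :
  additive_measure mu -> A \subset B -> mu A <= mu B.
Proof.
move=> [mu0 muadd] AB.
have -> : B = A :|: (B :\: A).
  apply/setP => x; rewrite !inE; case: (boolP (x \in A)) => xA //=.
  by rewrite (subsetP AB).
rewrite muadd ?lerDl ?mu0 //.
rewrite disjoints_subset; apply/subsetP => x; rewrite !inE => ->; by [].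
Qed.

Lemma mu_subadd (disp : Order.disp_t) (P : finTBLatticeType disp)
  (R : realFieldType) (mu : {set P} -> R) (A B : {set P}) :
  additive_measure mu -> mu (A :|: B) <= mu A + mu B.
Proof.
move=> hmu; have [mu0 muadd] := hmu.
have -> : A :|: B = A :|: (B :\: A).
  by apply/setP => x; rewrite !inE; case: (x \in A).
rewrite muadd; last first.
  rewrite disjoints_subset; apply/subsetP => x; rewrite !inE => ->; by [].
rewrite lerD2l; apply: (@mu_mono _ _ _ mu) => //; apply/subsetP => x; rewrite !inE; by case/andP.
Qed.

Lemma frag_ge0 (disp : Order.disp_t) (P : finTBLatticeType disp)
  (R : realFieldType) (mu : {set P} -> R) (f : P -> P) :
  additive_measure mu -> 0 <= fragility mu f.
Proof.
move=> [mu0 _]; rewrite /fragility.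
elim/big_ind: _ => [//|a b a0 b0|i _]; [by rewrite le_max a0|exact: mu0].
Qed.

Theorem mainTheorem19 (disp : Order.disp_t) (P : finTBLatticeType disp)
  (R : realFieldType) (mu : {set P} -> R) (f g : P -> P) :
  additive_measure mu -> is_closure f -> is_closure g ->
  fragility mu (cl_join f g) <= fragility mu f + fragility mu g.
Proof.
move=> hmu cf cg.
rewrite {1}/fragility; apply: bigmax_le.
  by rewrite addr_ge0 ?frag_ge0.
move=> w /and3P [cw lw pw].
have [extw _ _] := closure_props w cw.
pose N := ~: Phi w.
have Nmeet : forall x y, x \in N -> y \in N -> (x `&` y)%O \in N.
  move=> x y; rewrite !inE => xN yN.
  move/forallP: pw => /(_ x) /forallP /(_ y) /implyP; rewrite !inE; apply.
  by rewrite xN yN.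
have Ntop : (\top%O : P) \notin N.
  rewrite !inE negbK eq_le lex1; exact: extw.
have Nfix : forall x, x \in N -> (f x != x) || (g x != x).
  move=> x; rewrite !inE; apply: contraR; rewrite negb_or !negbK => /andP[/eqP fx /eqP gx].
  rewrite eq_le extw andbT.
  move/forallP: lw => /(_ x); by rewrite cl_join_fix.
have [S1 [S2 [v1 v2 _ _ cov]]] := @cover_aux _ _ f g N cf cg Nmeet Nfix _ \bot%O (leqnn _).
have NS : N \subset S1 :|: S2.
  by apply/subsetP => x xN; apply: cov => //; exact: le0x.
rewrite /rk -/N.
apply: le_trans (@mu_mono _ _ _ mu _ _ hmu NS) _.
apply: le_trans (@mu_subadd _ _ _ mu S1 S2 hmu) _.
apply: lerD.
  have := @le_bigmax_cond _ _ _ 0 (wS S1) (fun w : {ffun P -> P} => [&& is_closure w, le_fun w f & is_prime w]) (rk mu).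
  rewrite /rk (wS_Phi _ _ v1) setCK; apply.
  by rewrite (wS_closure _ _ v1) (wS_lef _ _ cf v1) (wS_prime _ _ v1).
have := @le_bigmax_cond _ _ _ 0 (wS S2) (fun w : {ffun P -> P} => [&& is_closure w, le_fun w g & is_prime w]) (rk mu).
rewrite /rk (wS_Phi _ _ v2) setCK; apply.
by rewrite (wS_closure _ _ v2) (wS_lef _ _ cg v2) (wS_prime _ _ v2).
Qed.
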